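(* Assume $p_0\in(0,1)$, $p_j\in(0,1)$ and $\tau_j=\frac{p_0}{p_0+2(1-p_0)p_j}$ for $j=1,\dots,k$. Then for all $\Theta=(\theta_1,\dots,\theta_n)$ and $X=(x_1,\dots,x_n)$ in $\mathbb R^{nd}$, $$\mathbb E\|g-\nabla F(X)\|^2\le 2\mathcal L\, D_F(\Theta,X),$$ where $g=(g_1,\dots,g_n)$, the expectation is over $\xi$ and $(l_i)_{i}$, and $D_F(\Theta,X)=F(\Theta)-F(X)-\langle\nabla F(X),\Theta-X\rangle$.
   Context: Clients $1,\dots,n$ are partitioned into nonempty disjoint clusters $\mathcal I_1,\dots,\mathcal I_k$; $d\ge1$. Each $f_i(\theta)=\frac1{n_i}\sum_{l=1}^{n_i}\tilde f_{i,l}(\theta)$ where each $\tilde f_{i,l}:\mathbb R^d\to\mathbb R$ is $\tilde L$-smooth and $\mu$-strongly convex. Fix $\gamma_i>0$ and $\alpha_j\in[0,1]$, not all $\alpha_j=0$. For a vector $\Theta=(\theta_1,\dots,\theta_n)$ define $\bar\theta_j=\frac{\sum_{i\in\mathcal I_j}\gamma_i\theta_i}{\sum_{i\in\mathcal I_j}\gamma_i}$, $\bar\theta=\frac{\sum_{j}\sum_{i\in\mathcal I_j}\alpha_j\gamma_i\theta_i}{\sum_{j}\sum_{i\in\mathcal I_j}\alpha_j\gamma_i}$ (and analogously $\bar x_j,\bar x$ for $X$), and $F(\Theta)=\sum_{j}\sum_{i\in\mathcal I_j}\big(f_i(\theta_i)+\frac{(1-\alpha_j)\gamma_i}{2}\|\theta_i-\bar\theta_j\|^2+\frac{\alpha_j\gamma_i}{2}\|\theta_i-\bar\theta\|^2\big)$.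 Randomness: $\xi_0,\dots,\xi_k$ independent Bernoulli with $\mathbb P(\xi_j=1)=p_j$, and independently for each client $i$ an index $l_i$ uniform on $\{1,\dots,n_i\}$. For $i\in\mathcal I_j$: $$g_i=\nabla f_i(x_i)+\alpha_j\gamma_i(x_i-\bar x)+(1-\alpha_j)\gamma_i(x_i-\bar x_j)+\mathbf 1\{\xi_0=1\}\frac{\gamma_i\alpha_j}{p_0}\big(\theta_i-\bar\theta-(x_i-\bar x)\big)$$ $$+\mathbf 1\{\xi_0=0,\xi_j=1\}\frac{\gamma_i(1-\tau_j)(1-\alpha_j)}{(1-p_0)p_j}\big((\theta_i-\bar\theta_j)-(x_i-\bar x_j)\big)+\mathbf 1\{\xi_0=0,\xi_j=0\}\frac{1}{(1-p_0)(1-p_j)}\big(\nabla\tilde f_{i,l_i}(\theta_i)-\nabla\tilde f_{i,l_i}(x_i)\big).$$ Define $\mathcal L=\max\big\{\frac{2}{p_0}\max_{j}\max_{i\in\mathcal I_j}\alpha_j\gamma_i,\ \max_{j}\frac{2(1-\alpha_j)\max_{i\in\mathcal I_j}\gamma_i}{p_0+2(1-p_0)p_j},\ \frac{\tilde L}{1-p_0}\max_{j}\frac{1}{1-p_j}\big\}$. *)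

(* Defs.v *)
From HB Require Import structures.
From mathcomp Require Import all_boot all_order all_algebra.
From mathcomp Require Import all_classical all_reals all_analysis.
Set Implicit Arguments. Unset Strict Implicit. Unset Printing Implicit Defensive.
Import Order.TTheory GRing.Theory Num.Theory.
Import numFieldNormedType.Exports.
Local Open Scope ring_scope.

Section Defs.
Variable R : realType.

Definition dotv (d : nat) (u v : 'rV[R]_d) : R := \sum_(c < d) u 0 c * v 0 c.
Definition norm2v (d : nat) (u : 'rV[R]_d) : R := dotv u u.
Definition enorm (d : nat) (u : 'rV[R]_d) : R := Num.sqrt (norm2v u).

(** Euclidean (Frobenius) inner product / squared norm on R^{nd} = 'M[R]_(n,d)
    (row i of a matrix is the block theta_i). *)
Definition dotm (n d : nat) (A B : 'M[R]_(n, d)) : R :=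
  \sum_(i < n) \sum_(c < d) A i c * B i c.
Definition norm2m (n d : nat) (A : 'M[R]_(n, d)) : R := dotm A A.

Definition is_gradient_v (d : nat) (f : 'rV[R]_d -> R) (G : 'rV[R]_d -> 'rV[R]_d) :=
  forall x, differentiable f x /\ forall v, 'D_v f x = dotv (G x) v.
Definition is_gradient_m (n d : nat) (f : 'M[R]_(n, d) -> R)
  (G : 'M[R]_(n, d) -> 'M[R]_(n, d)) :=
  forall X, differentiable f X /\ forall V, 'D_V f X = dotm (G X) V.

Definition smooth (d : nat) (L : R) (f : 'rV[R]_d -> R) (G : 'rV[R]_d -> 'rV[R]_d) :=
  is_gradient_v f G /\ forall x y, enorm (G x - G y) <= L * enorm (x - y).
Definition strongly_convex (d : nat) (mu : R) (f : 'rV[R]_d -> R)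
  (G : 'rV[R]_d -> 'rV[R]_d) :=
  is_gradient_v f G /\
  forall x y, f x + dotv (G x) (y - x) + mu / 2 * norm2v (y - x) <= f y.

Variables (n d k : nat) (cl : 'I_n -> 'I_k) (gam : 'I_n -> R) (alpha : 'I_k -> R).
(* cl i = the cluster j with i \in I_j *)

Definition clusterW (j : 'I_k) : R := \sum_(i < n | cl i == j) gam i.

Definition cbar (Th : 'M[R]_(n, d)) (j : 'I_k) : 'rV[R]_d :=
  (clusterW j)^-1 *: \sum_(i < n | cl i == j) gam i *: row i Th.

Definition gbar (Th : 'M[R]_(n, d)) : 'rV[R]_d :=
  (\sum_(i < n) alpha (cl i) * gam i)^-1 *:
    \sum_(i < n) (alpha (cl i) * gam i) *: row i Th.

Definition Fobj (f : 'I_n -> 'rV[R]_d -> R) (Th : 'M[R]_(n, d)) : R :=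
  \sum_(i < n) (f i (row i Th)
     + (1 - alpha (cl i)) * gam i / 2 * norm2v (row i Th - cbar Th (cl i))
     + alpha (cl i) * gam i / 2 * norm2v (row i Th - gbar Th)).

(** The estimator g = (g_1,...,g_n), as a function of the outcome
    (xi_0, (xi_j)_j, (l_i)_i). *)
Definition gvec (nn : 'I_n -> nat)
  (gtil : forall i : 'I_n, 'I_(nn i) -> 'rV[R]_d -> 'rV[R]_d)
  (gf : 'I_n -> 'rV[R]_d -> 'rV[R]_d) (p0 : R) (p tau : 'I_k -> R)
  (Th X : 'M[R]_(n, d)) (b0 : bool) (b : {ffun 'I_k -> bool})
  (l : {dffun forall i : 'I_n, 'I_(nn i)}) : 'M[R]_(n, d) :=
  \matrix_(i < n, c < d)
    (let j := cl i in let xi := row i X in let ti := row i Th in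
     gf i xi + (alpha j * gam i) *: (xi - gbar X)
       + ((1 - alpha j) * gam i) *: (xi - cbar X j)
       + (if b0 then (gam i * alpha j / p0) *: (ti - gbar Th - (xi - gbar X))
          else 0)
       + (if ~~ b0 && b j then
            (gam i * (1 - tau j) * (1 - alpha j) / ((1 - p0) * p j)) *:
              ((ti - cbar Th j) - (xi - cbar X j))
          else 0)
       + (if ~~ b0 && ~~ b j then
            ((1 - p0) * (1 - p j))^-1 *: (gtil i (l i) ti - gtil i (l i) xi)
          else 0)) 0 c.

(** Probability of an outcome: xi_0 ~ Bernoulli(p0), xi_j ~ Bernoulli(p_j),
    l_i uniform on {0,..,n_i - 1}, all independent. *)
Definition weight (nn : 'I_n -> nat) (p0 : R) (p : 'I_k -> R) (b0 : bool)
  (b : {ffun 'I_k -> bool}) : R :=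
  (if b0 then p0 else 1 - p0) * (\prod_(j < k) (if b j then p j else 1 - p j))
  * \prod_(i < n) ((nn i)%:R)^-1.

Definition expect (nn : 'I_n -> nat) (p0 : R) (p : 'I_k -> R)
  (V : bool -> {ffun 'I_k -> bool} -> {dffun forall i : 'I_n, 'I_(nn i)} -> R) : R :=
  \sum_(b0 : bool) \sum_(b : {ffun 'I_k -> bool})
    \sum_(l : {dffun forall i : 'I_n, 'I_(nn i)}) weight nn p0 p b0 b * V b0 b l.

(** The constant \mathcal L (maxima of nonnegative quantities, computed with
    0 as neutral element). *)
Definition Lcal (p0 : R) (p : 'I_k -> R) (Ltil : R) : R :=
  Num.max
    (Num.max
      (2 / p0 * \big[Num.max/0]_(j < k) \big[Num.max/0]_(i < n | cl i == j)
                   (alpha j * gam i))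
      (\big[Num.max/0]_(j < k)
          (2 * (1 - alpha j) * (\big[Num.max/0]_(i < n | cl i == j) gam i)
           / (p0 + 2 * (1 - p0) * p j))))
    (Ltil / (1 - p0) * \big[Num.max/0]_(j < k) (1 - p j)^-1).

End Defs.

Arguments gvec [R n d k] cl gam alpha nn gtil gf p0 p tau Th X b0 b l.
Arguments expect [R n k] nn p0 p V.
Arguments weight [R n k] nn p0 p b0 b.

(* Main.v *)
Require Import Defs.
From HB Require Import structures.
From mathcomp Require Import all_boot all_order all_algebra.
From mathcomp Require Import all_classical all_reals all_analysis.
From mathcomp Require Import ring lra.
Import Order.TTheory GRing.Theory Num.Theory.
Import numFieldNormedType.Exports.
Local Open Scope ring_scope.

Set Implicit Arguments. Unset Strict Implicit.


Section VecAlg.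
Local Open Scope classical_set_scope.
Local Open Scope ring_scope.
Variable R : realType.
Variable d : nat.
Implicit Types u v w : 'rV[R]_d.

Lemma dotvC u v : dotv u v = dotv v u.
Proof. by apply: eq_bigr => c _; rewrite mulrC. Qed.

Lemma dotvDl u v w : dotv (u + v) w = dotv u w + dotv v w.
Proof. rewrite /dotv -big_split; apply: eq_bigr => c _ /=; rewrite !mxE; ring. Qed.

Lemma dotvBl u v w : dotv (u - v) w = dotv u w - dotv v w.
Proof. rewrite /dotv -sumrB; apply: eq_bigr => c _ /=; rewrite !mxE; ring. Qed.

Lemma dotvZl (a : R) u w : dotv (a *: u) w = a * dotv u w.
Proof. rewrite /dotv mulr_sumr; apply: eq_bigr => c _; rewrite !mxE; ring. Qed.

Lemma dotvDr u v w : dotv w (u + v) = dotv w u + dotv w v.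
Proof. by rewrite !(dotvC w) dotvDl. Qed.
Lemma dotvBr u v w : dotv w (u - v) = dotv w u - dotv w v.
Proof. by rewrite !(dotvC w) dotvBl. Qed.
Lemma dotvZr (a : R) u w : dotv w (a *: u) = a * dotv w u.
Proof. by rewrite !(dotvC w) dotvZl. Qed.

Lemma dotv0l w : dotv 0 w = 0.
Proof. by rewrite /dotv big1 // => c _; rewrite mxE mul0r. Qed.
Lemma dotv0r w : dotv w 0 = 0.
Proof. by rewrite dotvC dotv0l. Qed.

Lemma dotv_suml (I : finType) (P : pred I) (F : I -> 'rV[R]_d) w :
  dotv (\sum_(i | P i) F i) w = \sum_(i | P i) dotv (F i) w.
Proof.
elim/big_rec2: _ => [|i y1 y2 _ <-]; first exact: dotv0l.
by rewrite dotvDl.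
Qed.

Lemma norm2v_ge0 u : 0 <= norm2v u.
Proof. by apply: sumr_ge0 => c _; rewrite -expr2 sqr_ge0. Qed.

Lemma norm2vD u v : norm2v (u + v) = norm2v u + 2 * dotv u v + norm2v v.
Proof. by rewrite /norm2v !dotvDl !dotvDr (dotvC v u); ring. Qed.
Lemma norm2vB u v : norm2v (u - v) = norm2v u - 2 * dotv u v + norm2v v.
Proof. by rewrite /norm2v !dotvBl !dotvBr (dotvC v u); ring. Qed.
Lemma norm2vZ (a : R) u : norm2v (a *: u) = a ^+ 2 * norm2v u.
Proof. by rewrite /norm2v dotvZl dotvZr; ring. Qed.
Lemma norm2v0 : norm2v (0 : 'rV[R]_d) = 0.
Proof. exact: dotv0l. Qed.

Lemma dotv_delta u c : dotv u (delta_mx 0 c) = u 0 c.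
Proof.
rewrite /dotv (bigD1 c) //= big1 => [|c' /negbTE H]; rewrite !mxE ?eqxx ?H /=.
  by rewrite mulr1 addr0.
by rewrite mulr0.
Qed.

Lemma dotv_ext u v : (forall w, dotv u w = dotv v w) -> u = v.
Proof.
move=> H; apply/rowP => c; by rewrite -!dotv_delta H.
Qed.

Lemma dot_young (s : R) u v : 0 < s -> 2 * dotv u v <= norm2v u / s + s * norm2v v.
Proof.
move=> s0.
have H := norm2v_ge0 (u - s *: v).
rewrite norm2vB norm2vZ dotvZr in H.
have -> : norm2v u / s + s * norm2v v = (norm2v u - 2 * (s * dotv u v) + s ^+ 2 * norm2v v) / s + 2 * dotv u v.
  by field; rewrite gt_eqF.
by rewrite lerDr divr_ge0 // ltW.
Qed.

End VecAlg.


Section Quot.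
Local Open Scope classical_set_scope.
Local Open Scope ring_scope.
Variable R : realType.

Lemma quot_derive (f : R -> R) x u w :
  (forall h : R, h != 0 -> h^-1 *: ((f \o shift x) (h *: 1) - f x) = u + h * w) ->
  derivable f x 1 /\ 'D_1 f x = u.
Proof.
move=> H.
have C : (fun h : R => h^-1 *: ((f \o shift x) (h *: 1) - f x)) @ 0^' --> u.
  have E : \forall h \near 0^', (fun h : R => u + h * w) h =
      (fun h : R => h^-1 *: ((f \o shift x) (h *: 1) - f x)) h.
    near=> h; rewrite H //; near: h; exact: nbhs_dnbhs_neq.
  apply: cvg_trans (near_eq_cvg E) _.
  apply: cvg_within_filter.
  have : (fun h : R => u + h * w) @ 0 --> u + 0 * w.
    apply: cvgD; first exact: cvg_cst.
    by apply: cvgMr_tmp; exact: cvg_id.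
  by rewrite mul0r addr0.
split; first by apply/cvg_ex; exists u.
exact: cvg_lim C.
Unshelve. all: by end_near.
Qed.

Lemma derive_transfer (V1 V2 : normedModType R) (F : V1 -> R) (G : V2 -> R) x v y w :
  (forall h : R, F (h *: v + x) = G (h *: w + y)) -> F x = G y ->
  (derivable F x v <-> derivable G y w) /\ 'D_v F x = 'D_w G y.
Proof.
move=> H H0.
have E : (fun h : R => h^-1 *: ((F \o shift x) (h *: v) - F x)) =
         (fun h : R => h^-1 *: ((G \o shift y) (h *: w) - G y)).
  by apply: funext => h /=; rewrite H H0.
by rewrite /derivable /derive E.
Qed.

Lemma rowv_scale_eq (a b : R) : a *: b = a * b.
Proof. by []. Qed.

Lemma line_derive d (f : 'rV[R]_d -> R) x v t :
  derivable f (x + t *: v) v ->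
  derivable (fun s : R => f (x + s *: v)) t 1 /\
  'D_1 (fun s : R => f (x + s *: v)) t = 'D_v f (x + t *: v).
Proof.
move=> Hd.
have [H1 H2] := @derive_transfer _ _ (fun s : R => f (x + s *: v)) f t 1 (x + t *: v) v
  (fun h => ltac:(congr f; rewrite rowv_scale_eq mulr1 scalerDl; rewrite addrCA addrA; reflexivity)) erefl.
by split => //; apply/H1.
Qed.

Lemma norm2v_eq0 d (u : 'rV[R]_d) : norm2v u = 0 -> u = 0.
Proof.
move=> /eqP; rewrite /norm2v /dotv psumr_eq0 => [/allP H|c _]; last by rewrite -expr2 sqr_ge0.
apply/rowP => c; rewrite mxE.
have := H c (mem_index_enum c); rewrite implyTb -expr2 sqrf_eq0.
by move/eqP.
Qed.

Lemma lip_sq d (L : R) (a b : 'rV[R]_d) : 0 <= L -> enorm a <= L * enorm b ->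
  norm2v a <= L ^+ 2 * norm2v b.
Proof.
move=> L0 H.
have ea : 0 <= enorm a by rewrite /enorm sqrtr_ge0.
have := ler_pM ea ea H H.
rewrite /enorm -!expr2 sqr_sqrtr ?norm2v_ge0 // exprMn sqr_sqrtr ?norm2v_ge0 //.
Qed.

Lemma descent d (L : R) (f : 'rV[R]_d -> R) G : 0 <= L -> smooth L f G ->
  forall y v, f (y + v) <= f y + dotv (G y) v + L / 2 * norm2v v.
Proof.
move=> L0 [Hg Hl] y v.
pose a := dotv (G y) v; pose b := L / 2 * norm2v v.
pose phi := fun s : R => f (y + s *: v).
pose rho := fun s : R => s * a + s ^+ 2 * b.
have Dphi t : derivable phi t 1 /\ 'D_1 phi t = dotv (G (y + t *: v)) v.
  have [dd Hv] := Hg (y + t *: v).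
  have [H1 H2] := @line_derive d f y v t (diff_derivable (v := v) dd).
  by split => //; rewrite /phi H2 Hv.
have Drho t : derivable rho t 1 /\ 'D_1 rho t = a + 2 * t * b.
  apply: (@quot_derive rho t (a + 2 * t * b) b) => h h0 /=; rewrite /rho [h%:A]mulr1 rowv_scale_eq.
  by field.
pose psi : R -> R := fun s => phi s - rho s.
have Dpsi t : derivable psi t 1.
  exact: (derivableB (Dphi t).1 (Drho t).1).
have cpsi : {within `[0, 1], continuous psi}.
  by apply: derivable_within_continuous => t _; exact: Dpsi.
have Hle0 : forall t : R, t \in `]0, 1[%R -> derive1 psi t <= 0.
  move=> t; rewrite in_itv /= => /andP [t0 t1].
  rewrite derive1E deriveB; [|exact: (Dphi t).1|exact: (Drho t).1].
  rewrite (Dphi t).2 (Drho t).2 subr_le0 /a /b.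
  rewrite -[dotv (G (y + t *: v)) v](subrK (dotv (G y) v)) -dotvBl addrC lerD2l.
  set w := G (y + t *: v) - G y.
  have Hw : norm2v w <= (L * t) ^+ 2 * norm2v v.
    apply: lip_sq; first by rewrite mulr_ge0 // ltW.
    have := Hl (y + t *: v) y; rewrite -/w.
    rewrite addrAC subrr add0r /enorm norm2vZ sqrtrM ?sqr_ge0 // sqrtr_sqr (ger0_norm (ltW t0)).
    by rewrite mulrA.
  have [L0'|Lp] := eqVneq L 0.
    move: Hw; rewrite L0' mul0r expr0n /= mul0r => Hw.
    have -> : w = 0 by apply: norm2v_eq0; apply/eqP; rewrite eq_le Hw norm2v_ge0.
    by rewrite dotv0l !mul0r mulr0.
  have Lt : 0 < L * t by rewrite mulr_gt0 // lt_def Lp L0.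
  have := @dot_young R d (L * t) w v Lt.
  have : norm2v w / (L * t) <= L * t * norm2v v.
    rewrite ler_pdivrMr //; apply: (le_trans Hw); rewrite le_eqVlt; apply/orP; left; apply/eqP; ring.
  move=> h1 h2.
  have : 2 * dotv w v <= 2 * (L * t * norm2v v) by lra.
  move=> h3; have : dotv w v <= L * t * norm2v v by lra.
  move=> h4; apply: (le_trans h4); rewrite le_eqVlt; apply/orP; left; apply/eqP; field; done.
have := @ler0_derive1_le_cc R psi 0 1 (fun t _ => Dpsi t) Hle0 cpsi 1 0.
rewrite !in_itv /= ler01 lexx /= => /(_ (lexx _) isT isT) H.
move: H; rewrite /psi /phi /rho scale0r addr0 scale1r !mul0r expr0n /= mul0r addr0 subr0 mul1r expr1n mul1r.
rewrite /b /a; lra.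
Qed.
End Quot.


Section Coco.
Local Open Scope classical_set_scope.
Local Open Scope ring_scope.
Variable R : realType.

Lemma cocoercive d (L : R) (f : 'rV[R]_d -> R) G : 0 <= L -> smooth L f G ->
  (forall x y, f x + dotv (G x) (y - x) <= f y) ->
  forall x y, norm2v (G y - G x) <= 2 * L * (f y - f x - dotv (G x) (y - x)).
Proof.
move=> L0 sm cvx x y.
have Hl := sm.2 y x.
have Hn := lip_sq L0 Hl.
have [L0'|Lp] := eqVneq L 0.
  move: Hn; rewrite L0' expr0n /= !mul0r => Hn.
  by rewrite mulr0 mul0r.
have Lt : 0 < L by rewrite lt_def Lp L0.
set w := G y - G x.
have Dz := descent L0 sm y (- (L^-1 *: w)).
have Cz := cvx x (y + - (L^-1 *: w)).
have e1 : y + - (L^-1 *: w) - x = (y - x) - L^-1 *: w.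
  by rewrite addrAC.
rewrite e1 dotvBr dotvZr in Cz.
have e2 : dotv (G y) (- (L^-1 *: w)) = - (L^-1 * dotv (G y) w) by rewrite -scaleNr dotvZr mulNr.
have e3 : norm2v (- (L^-1 *: w)) = L^-1 ^+ 2 * norm2v w by rewrite -scaleNr norm2vZ sqrrN.
rewrite e2 e3 in Dz.
have AB : dotv (G y) w - dotv (G x) w = norm2v w by rewrite -dotvBl.
set A := dotv (G y) w in Dz AB; set B := dotv (G x) w in Cz AB.
set N := norm2v w in Dz AB *.
set D0 := dotv (G x) (y - x) in Cz *.
have key : L^-1 * N - L / 2 * (L^-1 ^+ 2 * N) <= f y - f x - D0.
  have : L^-1 * A - L^-1 * B = L^-1 * N by rewrite -mulrBr AB.
  lra.
have E : 2 * L * (L^-1 * N - L / 2 * (L^-1 ^+ 2 * N)) = N.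
  by field.
rewrite -[X in X <= _]E.
by rewrite ler_pM2l // mulr_gt0.
Qed.

End Coco.


Section Grad.
Local Open Scope classical_set_scope.
Local Open Scope ring_scope.
Variable R : realType.

Lemma quot_derive_gen (V : normedModType R) (f : V -> R) x v (u w : R) :
  (forall h : R, h != 0 -> h^-1 *: ((f \o shift x) (h *: v) - f x) = u + h * w) ->
  derivable f x v /\ 'D_v f x = u.
Proof.
move=> H.
have C : (fun h : R => h^-1 *: ((f \o shift x) (h *: v) - f x)) @ 0^' --> u.
  have E : \forall h \near 0^', (fun h : R => u + h * w) h =
      (fun h : R => h^-1 *: ((f \o shift x) (h *: v) - f x)) h.
    near=> h; rewrite H //; near: h; exact: nbhs_dnbhs_neq.
  apply: cvg_trans (near_eq_cvg E) _.
  apply: cvg_within_filter.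
  have : (fun h : R => u + h * w) @ 0 --> u + 0 * w.
    apply: cvgD; first exact: cvg_cst.
    by apply: cvgMr_tmp; exact: cvg_id.
  by rewrite mul0r addr0.
split; first by apply/cvg_ex; exists u.
exact: cvg_lim C.
Unshelve. all: by end_near.
Qed.

Lemma grad_uniq d (m : nat) (F : 'I_m -> 'rV[R]_d -> R) (Gs : 'I_m -> 'rV[R]_d -> 'rV[R]_d)
  (f : 'rV[R]_d -> R) g (c : R) :
  (forall l, is_gradient_v (F l) (Gs l)) -> (forall x, f x = c * \sum_l F l x) ->
  is_gradient_v f g -> forall x, g x = c *: \sum_l Gs l x.
Proof.
move=> HF Hf Hg x; apply: dotv_ext => v.
rewrite -(Hg x).2.
have -> : f = c \*: (\sum_l F l).
  by apply: funext => y; rewrite Hf fct_sumE.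
rewrite deriveZ; last first.
  by apply: derivable_sum => l; apply: diff_derivable; exact: (HF l x).1.
rewrite derive_sum; last by move=> l; apply: diff_derivable; exact: (HF l x).1.
rewrite dotvZl dotv_suml; congr (_ * _).
by apply: eq_bigr => l _; rewrite (HF l x).2.
Qed.

Lemma rowD' m d i (A B : 'M[R]_(m, d)) : row i (A + B) = row i A + row i B.
Proof. by apply/rowP => c; rewrite !mxE. Qed.
Lemma rowB' m d i (A B : 'M[R]_(m, d)) : row i (A - B) = row i A - row i B.
Proof. by apply/rowP => c; rewrite !mxE. Qed.
Lemma rowZ' m d i (a : R) (A : 'M[R]_(m, d)) : row i (a *: A) = a *: row i A.
Proof. by apply/rowP => c; rewrite !mxE. Qed.
Lemma rowmatE m d (u : 'I_m -> 'rV[R]_d) i : row i (\matrix_(i0, c) (u i0) 0 c) = u i.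
Proof. by apply/rowP => c; rewrite !mxE. Qed.

Lemma dotmE m d (A B : 'M[R]_(m, d)) : dotm A B = \sum_i dotv (row i A) (row i B).
Proof. by apply: eq_bigr => i _; apply: eq_bigr => c _; rewrite !mxE. Qed.

Lemma dotm_ext m d (A B : 'M[R]_(m, d)) : (forall V, dotm A V = dotm B V) -> A = B.
Proof.
move=> H; apply/matrixP => i c.
have E (M : 'M[R]_(m, d)) : dotm M (delta_mx i c) = M i c.
  rewrite /dotm (bigD1 i) //= [X in _ + X]big1; last first.
    move=> i' Hi; rewrite big1 // => c' _; rewrite mxE.
    by rewrite (negbTE Hi) /= mulr0.
  rewrite addr0 (bigD1 c) //= [X in _ + X]big1; last first.
    by move=> c' Hc; rewrite mxE (negbTE Hc) andbF mulr0.
  by rewrite mxE !eqxx mulr1 addr0.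
by rewrite -!E H.
Qed.

Lemma quad_derive m d (L : 'M[R]_(m, d) -> 'rV[R]_d) (c : R) X V :
  (forall h : R, L (h *: V + X) = h *: L V + L X) ->
  derivable (fun Th => c * norm2v (L Th)) X V /\
  'D_V (fun Th => c * norm2v (L Th)) X = c * (2 * dotv (L X) (L V)).
Proof.
move=> HL.
apply: (@quot_derive_gen _ _ X V _ (c * norm2v (L V))) => h h0 /=.
rewrite HL norm2vD norm2vZ dotvZl dotvC.
by rewrite rowv_scale_eq; field.

Qed.

Lemma comp_derive m d (f : 'rV[R]_d -> R) (g : 'rV[R]_d -> 'rV[R]_d) i X V :
  is_gradient_v f g ->
  derivable (fun Th : 'M[R]_(m, d) => f (row i Th)) X V /\
  'D_V (fun Th : 'M[R]_(m, d) => f (row i Th)) X = dotv (g (row i X)) (row i V).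
Proof.
move=> Hg.
have [H1 H2] := @derive_transfer R _ _ (fun Th : 'M[R]_(m, d) => f (row i Th)) f X V (row i X) (row i V)
  (fun h => ltac:(by rewrite /= rowD' rowZ')) erefl.
split; first by apply/H1; apply: diff_derivable; exact: (Hg _).1.
by rewrite H2 (Hg _).2.
Qed.

End Grad.


Section FGrad.
Local Open Scope classical_set_scope.
Local Open Scope ring_scope.
Variable R : realType.
Variables (n d k : nat) (cl : 'I_n -> 'I_k) (gam : 'I_n -> R) (alpha : 'I_k -> R).
Hypothesis Wnz : forall j, clusterW cl gam j != 0.
Hypothesis Gnz : \sum_(i < n) alpha (cl i) * gam i != 0.

Lemma dotvNl (u w : 'rV[R]_d) : dotv (- u) w = - dotv u w.
Proof. by rewrite -scaleN1r dotvZl mulN1r. Qed.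

Local Notation cb := (cbar cl gam).
Local Notation gb := (gbar cl gam alpha).

Lemma cbarD (A B : 'M[R]_(n, d)) j : cb (A + B) j = cb A j + cb B j.
Proof.
rewrite /cbar -scalerDr -big_split /=; congr (_ *: _); apply: eq_bigr => i _.
by rewrite rowD' scalerDr.
Qed.
Lemma cbarZ (a : R) (A : 'M[R]_(n, d)) j : cb (a *: A) j = a *: cb A j.
Proof.
rewrite /cbar [in RHS]scalerA [a * _]mulrC -[in RHS]scalerA [in RHS]scaler_sumr; congr (_ *: _); apply: eq_bigr => i _.
by rewrite rowZ' !scalerA mulrC.
Qed.
Lemma cbarB (A B : 'M[R]_(n, d)) j : cb (A - B) j = cb A j - cb B j.
Proof. by rewrite cbarD -scaleN1r cbarZ scaleN1r. Qed.

Lemma gbarD (A B : 'M[R]_(n, d)) : gb (A + B) = gb A + gb B.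
Proof.
rewrite /gbar -scalerDr -big_split /=; congr (_ *: _); apply: eq_bigr => i _.
by rewrite rowD' scalerDr.
Qed.
Lemma gbarZ (a : R) (A : 'M[R]_(n, d)) : gb (a *: A) = a *: gb A.
Proof.
rewrite /gbar [in RHS]scalerA [a * _]mulrC -[in RHS]scalerA [in RHS]scaler_sumr; congr (_ *: _); apply: eq_bigr => i _.
by rewrite rowZ' !scalerA mulrC.
Qed.
Lemma gbarB (A B : 'M[R]_(n, d)) : gb (A - B) = gb A - gb B.
Proof. by rewrite gbarD -scaleN1r gbarZ scaleN1r. Qed.

Lemma center_c (X : 'M[R]_(n, d)) j :
  \sum_(i < n | cl i == j) gam i *: (row i X - cb X j) = 0.
Proof.
rewrite (eq_bigr (fun i => gam i *: row i X - gam i *: cb X j)); last by move=> i _; rewrite scalerBr.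
rewrite sumrB -scaler_suml /cbar scalerA -/(clusterW cl gam j) mulfV // scale1r.
by rewrite subrr.
Qed.

Lemma center_g (X : 'M[R]_(n, d)) :
  \sum_(i < n) (alpha (cl i) * gam i) *: (row i X - gb X) = 0.
Proof.
rewrite (eq_bigr (fun i => (alpha (cl i) * gam i) *: row i X - (alpha (cl i) * gam i) *: gb X)); last by move=> i _; rewrite scalerBr.
rewrite sumrB -scaler_suml /gbar scalerA mulfV // scale1r.
by rewrite subrr.
Qed.

Lemma S1 (X : 'M[R]_(n, d)) (w : 'I_k -> 'rV[R]_d) :
  \sum_(i < n) ((1 - alpha (cl i)) * gam i) * dotv (row i X - cb X (cl i)) (w (cl i)) = 0.
Proof.
rewrite (partition_big cl xpredT) //=.
apply: big1 => j _.
rewrite (eq_bigr (fun i => (1 - alpha j) * dotv (gam i *: (row i X - cb X j)) (w j))); last first.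
  by move=> i /eqP <-; rewrite dotvZl mulrA.
by rewrite -mulr_sumr -dotv_suml center_c dotv0l mulr0.
Qed.

Lemma S2 (X : 'M[R]_(n, d)) (w : 'rV[R]_d) :
  \sum_(i < n) (alpha (cl i) * gam i) * dotv (row i X - gb X) w = 0.
Proof.
rewrite (eq_bigr (fun i => dotv ((alpha (cl i) * gam i) *: (row i X - gb X)) w)); last first.
  by move=> i _; rewrite dotvZl.
by rewrite -dotv_suml center_g dotv0l.
Qed.

Definition G0 (gf : 'I_n -> 'rV[R]_d -> 'rV[R]_d) (X : 'M[R]_(n, d)) : 'M[R]_(n, d) :=
  \matrix_(i, c) (gf i (row i X) + (alpha (cl i) * gam i) *: (row i X - gb X)
       + ((1 - alpha (cl i)) * gam i) *: (row i X - cb X (cl i))) 0 c.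

Lemma rowG0 gf X i : row i (G0 gf X) = gf i (row i X) + (alpha (cl i) * gam i) *: (row i X - gb X)
       + ((1 - alpha (cl i)) * gam i) *: (row i X - cb X (cl i)).
Proof. exact: rowmatE. Qed.

Lemma GF_eq (f : 'I_n -> 'rV[R]_d -> R) gf GF X :
  is_gradient_m (Fobj cl gam alpha f) GF -> (forall i, is_gradient_v (f i) (gf i)) ->
  GF X = G0 gf X.
Proof.
move=> HGF Hf; apply: dotm_ext => V.
rewrite -(HGF X).2.
pose T1 i := fun Th : 'M[R]_(n, d) => f i (row i Th).
pose T2 i := fun Th : 'M[R]_(n, d) => (1 - alpha (cl i)) * gam i / 2 * norm2v (row i Th - cb Th (cl i)).
pose T3 i := fun Th : 'M[R]_(n, d) => alpha (cl i) * gam i / 2 * norm2v (row i Th - gb Th).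
have -> : Fobj cl gam alpha f = \sum_i (T1 i + T2 i + T3 i).
  by apply: funext => Th; rewrite fct_sumE.
have D1 i := comp_derive i X V (Hf i).
have D2 i := @quad_derive R n d (fun Th => row i Th - cb Th (cl i)) ((1 - alpha (cl i)) * gam i / 2) X V
  (fun h => ltac:(by rewrite /= rowD' rowZ' cbarD cbarZ scalerBr opprD addrACA)).
have D3 i := @quad_derive R n d (fun Th => row i Th - gb Th) (alpha (cl i) * gam i / 2) X V
  (fun h => ltac:(by rewrite /= rowD' rowZ' gbarD gbarZ scalerBr opprD addrACA)).
rewrite derive_sum; last first.
  by move=> i; apply: derivableD; [apply: derivableD|]; [exact: (D1 i).1|exact: (D2 i).1|exact: (D3 i).1].
rewrite (eq_bigr (fun i => dotv (gf i (row i X)) (row i V)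
   + (1 - alpha (cl i)) * gam i / 2 * (2 * dotv (row i X - cb X (cl i)) (row i V - cb V (cl i)))
   + alpha (cl i) * gam i / 2 * (2 * dotv (row i X - gb X) (row i V - gb V)))); last first.
  move=> i _; rewrite deriveD; [|apply: derivableD; [exact: (D1 i).1|exact: (D2 i).1]|exact: (D3 i).1].
  rewrite deriveD; [|exact: (D1 i).1|exact: (D2 i).1].
  by rewrite (D1 i).2 (D2 i).2 (D3 i).2.
rewrite dotmE.
have HS1 := S1 X (cb V); have HS2 := S2 X (gb V).
transitivity (\sum_(i < n) dotv (row i (G0 gf X)) (row i V)
   - \sum_(i < n) ((1 - alpha (cl i)) * gam i) * dotv (row i X - cb X (cl i)) (cb V (cl i))
   - \sum_(i < n) (alpha (cl i) * gam i) * dotv (row i X - gb X) (gb V)); last first.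
  by rewrite HS1 HS2 !subr0.
rewrite -!sumrB; apply: eq_bigr => i _.
rewrite rowG0 !dotvDl !dotvZl !dotvBr !dotvDl !dotvNl.
by field.
Qed.


Lemma quad_id (u a u' a' y m m' g : 'rV[R]_d) (c1 c2 ff fx : R) :
  y = (u - a) + m -> y = (u' - a') + m' ->
  ff + c1 / 2 * norm2v u + c2 / 2 * norm2v u' - (fx + c1 / 2 * norm2v a + c2 / 2 * norm2v a')
   - dotv (g + c2 *: a' + c1 *: a) y
  = (ff - fx - dotv g y + c1 / 2 * norm2v (u - a) + c2 / 2 * norm2v (u' - a'))
    - c1 * dotv a m - c2 * dotv a' m'.
Proof.
move=> H1 H2.
set B := u - a; set A := u' - a'.
have eu : u = a + B by rewrite /B addrC subrK.
have eu' : u' = a' + A by rewrite /A addrC subrK.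
have h1 : dotv a y = dotv a B + dotv a m by rewrite {1}H1 dotvDr.
have h2 : dotv a' y = dotv a' A + dotv a' m' by rewrite {1}H2 dotvDr.
rewrite [in norm2v u]eu [in norm2v u']eu' !norm2vD !dotvDl !dotvZl h1 h2.
by field.
Qed.

Lemma DF_eq (f : 'I_n -> 'rV[R]_d -> R) gf (Th X : 'M[R]_(n, d)) :
  Fobj cl gam alpha f Th - Fobj cl gam alpha f X - dotm (G0 gf X) (Th - X) =
  \sum_(i < n) ((f i (row i Th) - f i (row i X) - dotv (gf i (row i X)) (row i Th - row i X))
   + (1 - alpha (cl i)) * gam i / 2 * norm2v ((row i Th - cb Th (cl i)) - (row i X - cb X (cl i)))
   + alpha (cl i) * gam i / 2 * norm2v ((row i Th - gb Th) - (row i X - gb X))).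
Proof.
have HS1 := S1 X (fun j => cb Th j - cb X j).
have HS2 := S2 X (gb Th - gb X).
rewrite /Fobj dotmE.
set r := (fun i : 'I_n => _) in HS1 *.
transitivity (\sum_(i < n) ((f i (row i Th) - f i (row i X) - dotv (gf i (row i X)) (row i Th - row i X))
   + (1 - alpha (cl i)) * gam i / 2 * norm2v ((row i Th - cb Th (cl i)) - (row i X - cb X (cl i)))
   + alpha (cl i) * gam i / 2 * norm2v ((row i Th - gb Th) - (row i X - gb X)))
   - \sum_(i < n) ((1 - alpha (cl i)) * gam i) * dotv (row i X - cb X (cl i)) (cb Th (cl i) - cb X (cl i))
   - \sum_(i < n) (alpha (cl i) * gam i) * dotv (row i X - gb X) (gb Th - gb X)); last first.
  by rewrite HS1 HS2 !subr0.
rewrite -!sumrB; apply: eq_bigr => i _.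
rewrite rowG0 rowB'.
apply: quad_id.
  by apply/rowP => c; rewrite !mxE; ring.
by apply/rowP => c; rewrite !mxE; ring.
Qed.

End FGrad.


Section Marg.
Local Open Scope classical_set_scope.
Local Open Scope ring_scope.
Variable R : realType.

Lemma card_fiber n (nn : 'I_n -> nat) (i0 : 'I_n) (x : 'I_(nn i0)) :
  #|[pred l : {dffun forall i : 'I_n, 'I_(nn i)} | l i0 == x]| = (\prod_(i < n | i != i0) nn i)%N.
Proof.
pose F := fun i : 'I_n => [pred y : 'I_(nn i) | (i == i0) ==> (val y == val x)].
have E : [pred l : {dffun forall i : 'I_n, 'I_(nn i)} | l i0 == x] =i family F.
  move=> l; rewrite !inE; apply/eqP/familyP => [El i|Hl].
    rewrite /F inE -El; apply/implyP => /eqP Ei; by rewrite Ei.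
  have := Hl i0; rewrite inE eqxx /= => /eqP E1; apply: val_inj; exact E1.
rewrite (eq_card E) card_family foldrE big_map big_enum /= (bigD1 i0) //=.
have -> : #|F i0| = 1%N.
  rewrite -(card1 x); apply: eq_card => y; rewrite !inE eqxx /=.
  by apply/eqP/eqP => [E2|->]; [apply: val_inj|].
rewrite mul1n; apply: eq_bigr => i Hi.
rewrite -[RHS]card_ord; apply: eq_card => y; rewrite !inE (negbTE Hi) //.
Qed.

Lemma marg_l n (nn : 'I_n -> nat) (i0 : 'I_n) (H : 'I_(nn i0) -> R) :
  (forall i, (0 < nn i)%N) ->
  \sum_(l : {dffun forall i : 'I_n, 'I_(nn i)}) ((\prod_(i < n) ((nn i)%:R)^-1) * H (l i0))
  = ((nn i0)%:R)^-1 * \sum_x H x.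
Proof.
move=> npos.
rewrite -mulr_sumr.
rewrite (partition_big (fun l : {dffun forall i : 'I_n, 'I_(nn i)} => l i0) xpredT) //=.
rewrite (eq_bigr (fun x => H x *+ (\prod_(i < n | i != i0) nn i)%N)); last first.
  move=> x _; rewrite (eq_bigr (fun _ => H x)); last by move=> l /eqP ->.
  by rewrite sumr_const card_fiber.
rewrite sumrMnl -(mulr_natr (\sum_x H x)) mulrCA [RHS]mulrC; congr (_ * _).
rewrite natr_prod (bigD1 i0) //= -mulrA -big_split /= big1 ?mulr1 // => i _.
by rewrite mulVf // pnatr_eq0 -lt0n npos.
Qed.


Lemma marg_b k (p : 'I_k -> R) (j0 : 'I_k) (K : bool -> R) :
  \sum_(b : {ffun 'I_k -> bool}) (\prod_(j < k) (if b j then p j else 1 - p j)) * K (b j0)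
  = p j0 * K true + (1 - p j0) * K false.
Proof.
pose F := fun (j : 'I_k) (be : bool) => (if be then p j else 1 - p j) * (if j == j0 then K be else 1).
transitivity (\sum_(b : {ffun 'I_k -> bool}) \prod_(j < k) F j (b j)).
  apply: eq_bigr => b _; rewrite /F big_split /=; congr (_ * _).
  rewrite (bigD1 j0) //= eqxx [X in _ * X]big1; first by rewrite mulr1.
  by move=> j /negbTE ->.
rewrite -bigA_distr_bigA (bigD1 j0) //= [X in _ * X]big1; last first.
  by move=> j /negbTE Hj; rewrite big_bool /F Hj /=; ring.
by rewrite mulr1 big_bool /F eqxx.
Qed.

Lemma expect_marg n k (cl : 'I_n -> 'I_k) (nn : 'I_n -> nat) (p0 : R) (p : 'I_k -> R)
  (h : forall i : 'I_n, bool -> bool -> 'I_(nn i) -> R) :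
  (forall i, (0 < nn i)%N) ->
  expect nn p0 p (fun b0 b l => \sum_(i < n) h i b0 (b (cl i)) (l i)) =
  \sum_(i < n) (p0 * (p (cl i) * (((nn i)%:R)^-1 * \sum_x h i true true x)
                     + (1 - p (cl i)) * (((nn i)%:R)^-1 * \sum_x h i true false x))
        + (1 - p0) * (p (cl i) * (((nn i)%:R)^-1 * \sum_x h i false true x)
                     + (1 - p (cl i)) * (((nn i)%:R)^-1 * \sum_x h i false false x))).
Proof.
move=> npos; rewrite /expect.
have E1 b0 b : \sum_(l : {dffun forall i : 'I_n, 'I_(nn i)}) weight nn p0 p b0 b * \sum_(i < n) h i b0 (b (cl i)) (l i)
   = \sum_(i < n) ((if b0 then p0 else 1 - p0) * (\prod_(j < k) (if b j then p j else 1 - p j)) *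
        (((nn i)%:R)^-1 * \sum_x h i b0 (b (cl i)) x)).
  under eq_bigr => l _ do rewrite mulr_sumr.
  rewrite exchange_big /=; apply: eq_bigr => i _.
  rewrite -(marg_l (fun x => h i b0 (b (cl i)) x) npos) mulr_sumr.
  apply: eq_bigr => l _; rewrite /weight !mulrA. done.
under eq_bigr => b0 _ do under eq_bigr => b _ do rewrite E1.
under eq_bigr => b0 _ do rewrite exchange_big.
rewrite exchange_big /=; apply: eq_bigr => i _.
have M (c : R) (K : bool -> R) : \sum_(b : {ffun 'I_k -> bool}) (c * (\prod_(j < k) (if b j then p j else 1 - p j)) * K (b (cl i)))
   = c * (p (cl i) * K true + (1 - p (cl i)) * K false).
  by rewrite -(marg_b p (cl i) K) mulr_sumr; apply: eq_bigr => b _; rewrite mulrA.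
rewrite big_bool /=.
rewrite (M p0 (fun be => ((nn i)%:R)^-1 * \sum_x h i true be x)).
by rewrite (M (1 - p0) (fun be => ((nn i)%:R)^-1 * \sum_x h i false be x)).
Qed.

End Marg.


Section Scal.
Local Open Scope classical_set_scope.
Local Open Scope ring_scope.
Variable R : realType.

Lemma final_scalar (P q g al tau A2 B2 Df Sc Lc Lt : R) :
 0 < P < 1 -> 0 < q < 1 -> 0 < g -> 0 <= al <= 1 -> tau = P / (P + 2 * (1 - P) * q) ->
 0 <= A2 -> 0 <= B2 -> 0 <= Df -> 0 <= Lt ->
 2 / P * (al * g) <= Lc ->
 2 * (1 - al) * g / (P + 2 * (1 - P) * q) <= Lc ->
 Lt / (1 - P) * (1 - q)^-1 <= Lc ->
 Sc <= 2 * Lt * Df ->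
 P * (q * ((g * al / P) ^+ 2 * A2) + (1 - q) * ((g * al / P) ^+ 2 * A2)) +
 (1 - P) * (q * ((g * (1 - tau) * (1 - al) / ((1 - P) * q)) ^+ 2 * B2)
   + (1 - q) * (((1 - P) * (1 - q))^-1 ^+ 2 * Sc))
 <= 2 * Lc * (Df + (1 - al) * g / 2 * B2 + al * g / 2 * A2).
Proof.
move=> /andP[P0 P1] /andP[q0 q1] g0 /andP[a0 a1] Htau A0 B0 D0 Lt0 H1 H2 H3 H4.
have Pn : P != 0 by rewrite gt_eqF.
have qn : q != 0 by rewrite gt_eqF.
have P1n : 1 - P != 0 by rewrite gt_eqF // subr_gt0.
have q1n : 1 - q != 0 by rewrite gt_eqF // subr_gt0.
have P1p : 0 < 1 - P by rewrite subr_gt0.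
have q1p : 0 < 1 - q by rewrite subr_gt0.
set s := P + 2 * (1 - P) * q.
have sp : 0 < s by rewrite /s addr_gt0 // !mulr_gt0.
have sn : s != 0 by rewrite gt_eqF.
set u := g * al.
have u0 : 0 <= u by rewrite /u mulr_ge0 // ltW.
have e1 : P * (q * ((g * al / P) ^+ 2 * A2) + (1 - q) * ((g * al / P) ^+ 2 * A2)) = u * (u / P) * A2.
  by rewrite /u; field.
have h1 : u / P <= Lc / 2.
  move: H1; rewrite [al * g]mulrC -/u => H1.
  rewrite (_ : u / P = (2 / P * u) / 2); last by field.
  by rewrite ler_pM2r // invr_gt0.
have Lc0 : 0 <= Lc.
  apply: le_trans H1; apply: mulr_ge0; [apply: divr_ge0 => //; exact: ltW | rewrite mulr_ge0 // ltW //].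
have h1' : u / P <= Lc.
  apply: (le_trans h1); rewrite ler_pdivrMr //.
  have -> : Lc * 2 = Lc + Lc by ring.
  rewrite lerDl; exact: Lc0.
have T1 : u * (u / P) * A2 <= 2 * Lc * (al * g / 2 * A2).
  have : u * (u / P) * A2 <= u * Lc * A2 by apply: ler_wpM2r => //; apply: ler_wpM2l.
  have -> : 2 * Lc * (al * g / 2 * A2) = u * Lc * A2 by rewrite /u; field.
  done.
set w := 2 * (1 - al) * g / s.
have w0 : 0 <= w.
  rewrite /w; apply: divr_ge0; last exact: ltW sp.
  apply: mulr_ge0; last exact: ltW g0.
  by apply: mulr_ge0 => //; rewrite subr_ge0.
have ec : g * (1 - tau) * (1 - al) / ((1 - P) * q) = w.
  by rewrite Htau /w /s; field; rewrite -/s sn qn P1n.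
have T2 : (1 - P) * (q * (w ^+ 2 * B2)) <= 2 * Lc * ((1 - al) * g / 2 * B2).
  have e2 : 2 * Lc * ((1 - al) * g / 2 * B2) = Lc * (w * s / 2) * B2.
    by rewrite /w; field.
  rewrite e2.
  have ha : (1 - P) * (q * (w ^+ 2 * B2)) <= w * (w * s / 2) * B2.
    have : (1 - P) * q * w ^+ 2 <= w ^+ 2 * (s / 2).
      rewrite mulrC ler_wpM2l ?sqr_ge0 // /s; lra.
    move=> hh.
    have -> : (1 - P) * (q * (w ^+ 2 * B2)) = ((1 - P) * q * w ^+ 2) * B2 by ring.
    have -> : w * (w * s / 2) * B2 = (w ^+ 2 * (s / 2)) * B2 by rewrite expr2; ring.
    by apply: ler_wpM2r.
  apply: (le_trans ha); apply: ler_wpM2r => //; apply: ler_wpM2r.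
    by apply: divr_ge0 => //; apply: mulr_ge0 => //; exact: ltW sp.
  exact: H2.
have T3 : (1 - P) * ((1 - q) * (((1 - P) * (1 - q))^-1 ^+ 2 * Sc)) <= 2 * Lc * Df.
  have e3 : (1 - P) * ((1 - q) * (((1 - P) * (1 - q))^-1 ^+ 2 * Sc)) = Sc / ((1 - P) * (1 - q)).
    by field; rewrite ?P1n ?q1n.
  rewrite e3 ler_pdivrMr ?mulr_gt0 //.
  apply: (le_trans H4).
  have : 2 * Lt * Df = 2 * (Lt / (1 - P) * (1 - q)^-1) * Df * ((1 - P) * (1 - q)) by field; rewrite ?P1n ?q1n.
  move=> ->; apply: ler_wpM2r; first by rewrite mulr_ge0 // ltW.
  by apply: ler_wpM2r => //; apply: ler_wpM2l.
rewrite e1 ec.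
have -> : 2 * Lc * (Df + (1 - al) * g / 2 * B2 + al * g / 2 * A2) =
   2 * Lc * (al * g / 2 * A2) + (2 * Lc * ((1 - al) * g / 2 * B2) + 2 * Lc * Df) by ring.
apply: lerD => //.
rewrite mulrDr; apply: lerD => //.
Qed.

End Scal.


Unset Implicit Arguments. Set Strict Implicit.

Theorem mainTheorem10 (R : realType) (n d k : nat) (cl : 'I_n -> 'I_k)
  (nn : 'I_n -> nat)
  (ftil : forall i : 'I_n, 'I_(nn i) -> 'rV[R]_d -> R)
  (gtil : forall i : 'I_n, 'I_(nn i) -> 'rV[R]_d -> 'rV[R]_d)
  (f : 'I_n -> 'rV[R]_d -> R) (gf : 'I_n -> 'rV[R]_d -> 'rV[R]_d)
  (GF : 'M[R]_(n, d) -> 'M[R]_(n, d))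
  (Ltil mu : R) (gam : 'I_n -> R) (alpha : 'I_k -> R)
  (p0 : R) (p tau : 'I_k -> R) :
  (0 < d)%N ->
  (forall j : 'I_k, exists i : 'I_n, cl i = j) ->
  (forall i, (0 < nn i)%N) ->
  (forall i l, smooth Ltil (ftil i l) (gtil i l)) ->
  0 < mu ->
  (forall i l, strongly_convex mu (ftil i l) (gtil i l)) ->
  (forall i x, f i x = ((nn i)%:R)^-1 * \sum_(l < nn i) ftil i l x) ->
  (forall i, is_gradient_v (f i) (gf i)) ->
  (forall i, 0 < gam i) ->
  (forall j, 0 <= alpha j <= 1) ->
  (exists j, alpha j != 0) ->
  is_gradient_m (Fobj cl gam alpha f) GF ->
  0 < p0 < 1 ->
  (forall j, 0 < p j < 1) ->
  (forall j, tau j = p0 / (p0 + 2 * (1 - p0) * p j)) ->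
  forall Th X : 'M[R]_(n, d),
    expect nn p0 p
      (fun b0 b l => norm2m (gvec cl gam alpha nn gtil gf p0 p tau Th X b0 b l - GF X))
    <= 2 * Lcal cl gam alpha p0 p Ltil
         * (Fobj cl gam alpha f Th - Fobj cl gam alpha f X
            - dotm (GF X) (Th - X)).
Proof.
move=> d0 clne npos Hsm mu0 Hsc Hf Hgf gam0 al01 [j0 aj0] HGF p01 p1 Htau Th X.
have cvx i l x y : ftil i l x + dotv (gtil i l x) (y - x) <= ftil i l y.
  have [_ H] := Hsc i l; apply: le_trans (H x y); rewrite lerDl.
  apply: mulr_ge0; last exact: norm2v_ge0.
  by apply: divr_ge0 => //; exact: ltW.
have [i0 ci0] := clne j0.
have Lt0 : 0 <= Ltil.
  pose l0 := Ordinal (npos i0).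
  have := (Hsm i0 l0).2 (const_mx 1) 0.
  have en0 : 0 < enorm (const_mx 1 - 0 : 'rV[R]_d).
    rewrite /enorm sqrtr_gt0 subr0 /norm2v /dotv.
    rewrite (eq_bigr (fun _ => 1)); last by move=> c _; rewrite mxE mulr1.
    by rewrite sumr_const card_ord ltr0n.
  have ge : 0 <= enorm (gtil i0 l0 (const_mx 1) - gtil i0 l0 0) by rewrite /enorm sqrtr_ge0.
  move=> H; have := le_trans ge H.
  by rewrite pmulr_lge0.
have Wnz j : clusterW cl gam j != 0.
  have [i ci] := clne j.
  rewrite gt_eqF // /clusterW (bigD1 i) /=; last by rewrite ci.
  apply: (lt_le_trans (gam0 i)); rewrite lerDl.
  by apply: sumr_ge0 => i' _; exact: ltW.
have Gnz : \sum_(i < n) alpha (cl i) * gam i != 0.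
  rewrite gt_eqF // (bigD1 i0) //=.
  have pos : 0 < alpha (cl i0) * gam i0.
    by rewrite ci0 mulr_gt0 // lt_def aj0; case/andP: (al01 j0).
  apply: (lt_le_trans pos); rewrite lerDl.
  apply: sumr_ge0 => i _; apply: mulr_ge0; last exact: ltW.
  by case/andP: (al01 (cl i)).
have Egf i x : gf i x = ((nn i)%:R)^-1 *: \sum_l gtil i l x.
  exact: (grad_uniq (fun l => (Hsm i l).1) (Hf i) (Hgf i) x).
have EGF : GF X = G0 cl gam alpha gf X by exact: (GF_eq Wnz Gnz X HGF Hgf).
pose c1 i := gam i * alpha (cl i) / p0.
pose A i := row i Th - gbar cl gam alpha Th - (row i X - gbar cl gam alpha X).
pose c2 i := gam i * (1 - tau (cl i)) * (1 - alpha (cl i)) / ((1 - p0) * p (cl i)).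
pose B i := (row i Th - cbar cl gam Th (cl i)) - (row i X - cbar cl gam X (cl i)).
pose c3 i := ((1 - p0) * (1 - p (cl i)))^-1.
pose C i (x : 'I_(nn i)) := gtil i x (row i Th) - gtil i x (row i X).
pose h := fun (i : 'I_n) (b0 be : bool) (x : 'I_(nn i)) =>
  norm2v ((if b0 then c1 i *: A i else 0) + (if ~~ b0 && be then c2 i *: B i else 0)
     + (if ~~ b0 && ~~ be then c3 i *: C i x else 0)).
have Hint : (fun b0 b l => norm2m (gvec cl gam alpha nn gtil gf p0 p tau Th X b0 b l - GF X))
   = (fun b0 (b : {ffun 'I_k -> bool}) (l : {dffun forall i : 'I_n, 'I_(nn i)}) => \sum_(i < n) h i b0 (b (cl i)) (l i)).
  apply: funext => b0; apply: funext => b; apply: funext => l.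
  rewrite EGF /norm2m dotmE; apply: eq_bigr => i _; rewrite /h; congr norm2v.
  rewrite rowB' rowG0 /gvec /c1 /A /c2 /B /c3 /C; apply/rowP => c; rewrite !mxE /=.
  ring.
rewrite Hint (expect_marg cl p0 p h npos) EGF (DF_eq Wnz Gnz f gf Th X) mulr_sumr.
apply: ler_sum => i _.
have cst (v : R) : ((nn i)%:R)^-1 * \sum_(x < nn i) v = v.
  rewrite sumr_const card_ord -(mulr_natl v) mulrA mulVf ?mul1r //.
  by rewrite pnatr_eq0 -lt0n npos.
rewrite /h /= !addr0 !add0r !cst.
rewrite !norm2vZ.
under eq_bigr => x _ do rewrite add0r norm2vZ.
rewrite -mulr_sumr [_^-1 * (c3 i ^+ 2 * _)]mulrCA.
have Ql := p1 (cl i).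
have Lc1 : 2 / p0 * (alpha (cl i) * gam i) <= Lcal cl gam alpha p0 p Ltil.
  rewrite /Lcal le_max; apply/orP; left; rewrite le_max; apply/orP; left.
  apply: ler_wpM2l; first by rewrite divr_ge0 // ltW //; case/andP: p01.
  apply: le_trans (le_bigmax _ _ (cl i)).
  by apply: le_bigmax_cond.
have Lc2 : 2 * (1 - alpha (cl i)) * gam i / (p0 + 2 * (1 - p0) * p (cl i)) <= Lcal cl gam alpha p0 p Ltil.
  rewrite /Lcal le_max; apply/orP; left; rewrite le_max; apply/orP; right.
  apply: le_trans (le_bigmax _ _ (cl i)) => /=.
  have s0 : 0 < p0 + 2 * (1 - p0) * p (cl i).
    case/andP: p01 => a b; case/andP: Ql => c e.
    by rewrite addr_gt0 // !mulr_gt0 // subr_gt0.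
  apply: ler_wpM2r; first by rewrite invr_ge0 ltW.
  apply: ler_wpM2l; first by rewrite mulr_ge0 // subr_ge0; case/andP: (al01 (cl i)).
  by apply: le_bigmax_cond.
have Lc3 : Ltil / (1 - p0) * (1 - p (cl i))^-1 <= Lcal cl gam alpha p0 p Ltil.
  rewrite /Lcal le_max; apply/orP; right.
  apply: ler_wpM2l; first by rewrite divr_ge0 // subr_ge0 ltW //; case/andP: p01.
  exact: (le_bigmax _ (fun j => (1 - p j)^-1) (cl i)).
have EDf : f i (row i Th) - f i (row i X) - dotv (gf i (row i X)) (row i Th - row i X)
   = ((nn i)%:R)^-1 * \sum_l (ftil i l (row i Th) - ftil i l (row i X) - dotv (gtil i l (row i X)) (row i Th - row i X)).
  by rewrite !Hf Egf dotvZl dotv_suml -!mulrBr -!sumrB.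
have Df0 : 0 <= f i (row i Th) - f i (row i X) - dotv (gf i (row i X)) (row i Th - row i X).
  rewrite EDf; apply: mulr_ge0; first by rewrite invr_ge0 ler0n.
  apply: sumr_ge0 => l _; have := cvx i l (row i X) (row i Th); lra.
have HSc : ((nn i)%:R)^-1 * \sum_(x < nn i) norm2v (C i x)
   <= 2 * Ltil * (f i (row i Th) - f i (row i X) - dotv (gf i (row i X)) (row i Th - row i X)).
  rewrite EDf mulrCA; apply: ler_wpM2l; first by rewrite invr_ge0 ler0n.
  rewrite mulr_sumr; apply: ler_sum => l _.
  exact: (cocoercive Lt0 (Hsm i l) (cvx i l) (row i X) (row i Th)).
exact: (final_scalar p01 Ql (gam0 i) (al01 (cl i)) (Htau (cl i)) (norm2v_ge0 _) (norm2v_ge0 _) Df0 Lt0 Lc1 Lc2 Lc3 HSc).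
Qed.
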